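(* In the construction described in the context, fix $i\ge2$. For $2\le k\le i$ let $T_{ik}=D_iD_{i-1}\cdots D_k\le G_i$. Then: (a) each $T_{ik}$ is normal in $G_i$; (b) each $T_{ik}$ is complemented in $G_i$ by the subgroup $G_{k-1}$; (c) $[T_{ik},R_{k-1}]=T_{ik}$.
   Context: For a group $X$ acted on by a group $Y$, $[X,Y]$ denotes the subgroup generated by all $x^{-1}x^{y}$. A finite $p$-group $P$ is extra-special if $P'=Z(P)$ has order $p$. Construction: let $p_1,p_2,\dots$ be an infinite sequence of primes with $p_{i+1}\ne p_i$ for all $i$. Define finite groups $G_1\le G_2\le\cdots$ and subgroups $R_i\le G_i$ recursively. Let $G_1=R_1$ be cyclic of order $p_1$. For $i\ge2$: let $M_i$ be an extra-special group of order $p_i^3$; let $B$ be the base group of the regular wreath product $M_i\wr G_{i-1}$ (direct product of $|G_{i-1}|$ copies of $M_i$, permuted regularly by $G_{i-1}$); let $B_i=B/[B',G_{i-1}]$ with the induced $G_{i-1}$-action; $D_i=[B_i,R_{i-1}]$; $G_i=D_i\rtimes G_{i-1}$; $R_i=D_i'$. Each $D_j$ ($j\le i$) is regarded as a subgroup of $G_j\le G_i$. *)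

(* Defs.v *)
From HB Require Import structures.
From mathcomp Require Import all_boot all_order all_fingroup all_solvable.
Set Implicit Arguments. Unset Strict Implicit. Unset Printing Implicit Defensive.
Local Open Scope group_scope.

Section Step.
Variables (sT : finGroupType) (G : {group sT}) (mT : finGroupType) (M : {group mT}).
Definition Xt := subg_of G.
Definition Bt := {dffun forall x : subg_of G, subg_of M}.
Definition wr_act (f : Bt) (g : subg_of G) : Bt := [ffun x => f (x * g^-1)].
Lemma wr_act1 : wr_act^~ 1 =1 id.
Proof. by move=> f; apply/ffunP=> x; rewrite ffunE invg1 mulg1. Qed.
Lemma wr_actM f : act_morph wr_act f.
Proof. by move=> a b; apply/ffunP=> x; rewrite !ffunE invMg mulgA. Qed.
Definition wr_action := TotalAction wr_act1 wr_actM.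
Lemma wr_is_groupAction : is_groupAction [set: Bt] wr_action.
Proof.
move=> a _; rewrite inE; apply/andP; split.
  by apply/subsetP=> x; rewrite inE.
apply/morphicP=> f h _ _; rewrite !actpermE; apply/ffunP=> x.
by rewrite /= /wr_act !ffunE.
Qed.
Definition wr_gaction := GroupAction wr_is_groupAction.
Definition St := sdprod_by wr_gaction.
Definition wrB : {set St} := sdpair1 wr_gaction @* [set: Bt].
Definition wrG : {set St} := sdpair2 wr_gaction @* [set: subg_of G].
Definition wrK : {set St} := [~: wrB^`(1), wrG].
Definition Qt := coset_of wrK.
Definition emb (g : sT) : Qt := coset wrK (sdpair2 wr_gaction (subg G g)).
Variable R : {set sT}.
Definition newD : {group Qt} := [group of [~: wrB / wrK, emb @: R]].
Definition newG : {group Qt} := [group of newD <*> emb @: G].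
Definition newR : {group Qt} := [group of newD^`(1)].
End Step.

Record stage := Stage {
  st_T : finGroupType;
  st_G : {group st_T};
  st_R : {group st_T};
  st_Ds : nat -> {set st_T};
  st_Gs : nat -> {set st_T};
  st_Rs : nat -> {set st_T} }.

Definition next_stage (n : nat) (s : stage) (mT : finGroupType) (M : {group mT}) : stage :=
  let G := st_G s in
  let e := @emb _ G _ M in
  let D := @newD _ G _ M (st_R s) in
  let Gn := @newG _ G _ M (st_R s) in
  let Rn := @newR _ G _ M (st_R s) in
  @Stage (@Qt _ G _ M) Gn Rn
    (fun j => if j == n then gval D else e @: st_Ds s j)
    (fun j => if j == n then gval Gn else e @: st_Gs s j)
    (fun j => if j == n then gval Rn else e @: st_Rs s j).

Fixpoint tower (gT1 : finGroupType) (G1 : {group gT1})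
  (mT : nat -> finGroupType) (M : forall n, {group mT n}) (m : nat) : stage :=
  match m with
  | 0 => @Stage gT1 G1 G1 (fun _ => 1) (fun _ => G1) (fun _ => G1)
  | m'.+1 => next_stage m.+1 (tower G1 M m') (M m.+1)
  end.

Definition extra_special (p : nat) (gT : finGroupType) (P : {set gT}) : bool :=
  [&& p.-group P, P^`(1) == 'Z(P) & #|'Z(P)| == p].

(* Main.v *)
Require Import Defs.
From HB Require Import structures.
From mathcomp Require Import all_boot all_order all_fingroup all_solvable.
From mathcomp Require Import zify.
Set Implicit Arguments. Unset Strict Implicit. Unset Printing Implicit Defensive.
Local Open Scope group_scope.

Lemma coprime_commGid' (gT : finGroupType) (G A : {group gT}) :
  A \subset 'N(G) -> coprime #|G| #|A| -> solvable G -> [~: G, A, A] = [~: G, A].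
Proof.
move=> nGA coGA solG.
have sHG : [~: G, A] \subset G by rewrite commg_subl.
have nHA : A \subset 'N([~: G, A]) := commg_normr A G.
have nHG : G \subset 'N([~: G, A]) := commg_norml G A.
have coHA : coprime #|[~: G, A]| #|A| := coprimeSg sHG coGA.
have solH := solvableS sHG solG.
have eqG : G \subset [~: G, A] * 'C_G(A).
  rewrite -quotientSK // (coprime_norm_quotient_cent nGA nHA coHA solH).
  by rewrite subsetI subxx quotient_cents2r.
apply/eqP; rewrite eqEsubset commSg //= gen_subG.
apply/subsetP=> _ /imset2P[g a Gg Aa ->].
have [h c Hh Cc ->] := mulsgP (subsetP eqG g Gg).
have [Gc cAc] := setIP Cc.
rewrite commMgJ (_ : [~ c, a] = 1) ?mulg1; last first.
  by apply/eqP/commgP; apply: (centP cAc).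
rewrite memJ_norm ?mem_commg //.
have nKc : 'C_G(A) \subset 'N([~: [~: G, A], A]).
  apply: normsR; first exact: subset_trans (subsetIl _ _) nHG.
  exact: subset_trans (subsetIr _ _) (cent_sub A).
exact: subsetP nKc c Cc.
Qed.

Section StepProps.
Variables (sT : finGroupType) (G : {group sT}) (mT : finGroupType) (M : {group mT}).

Local Notation to := (wr_gaction G M).
Local Notation B := (sdpair1 to @* [set: Bt G M]).
Local Notation GG := (sdpair2 to @* [set: Xt G]).
Local Notation K := [~: B^`(1), GG].

Lemma wrBE : wrB G M = B. Proof. by []. Qed.
Lemma wrGE : wrG G M = GG. Proof. by []. Qed.
Lemma wrKE : wrK G M = K. Proof. by []. Qed.

Lemma nBG : GG \subset 'N(B).
Proof. exact: im_sdpair_norm. Qed.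

Lemma sKB : K \subset B.
Proof.
apply: subset_trans (der_sub 1 B); rewrite commg_subl.
exact: char_norm_trans (der_char 1 B) nBG.
Qed.

Lemma nKG : GG \subset 'N(K).
Proof. exact: commg_normr. Qed.

Lemma tiBG : B :&: GG = 1.
Proof. exact: im_sdpair_TI. Qed.

Lemma emb_in x : emb G M x = coset K (sdpair2 to (subg G x)).
Proof. by []. Qed.

Lemma sdp2_in (u : Xt G) : sdpair2 to u \in GG.
Proof. by rewrite mem_morphim ?inE. Qed.

Lemma embM : morphic G (emb G M).
Proof.
apply/morphicP=> x y Gx Gy; rewrite !emb_in subgM // morphM ?inE //.
by rewrite morphM // (subsetP nKG) ?sdp2_in.
Qed.

Definition embm := morphm_morphism embM.

Lemma injm_emb : 'injm embm.
Proof.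
apply/subsetP=> x kx; have Gx := dom_ker kx; have ex1 : coset K (sdpair2 to (subg G x)) = 1 := mker kx.
have Nw := subsetP nKG _ (sdp2_in (subg G x)).
have Kw := coset_idr Nw ex1.
have : sdpair2 to (subg G x) \in B :&: GG by rewrite inE (subsetP sKB) ?sdp2_in.
rewrite tiBG inE => /eqP h.
have : subg G x = 1.
  apply: (injmP (injm_sdpair2 to)); rewrite ?inE //.
  by rewrite /= h morph1.
by move/(congr1 val); rewrite subgK // => ->; rewrite inE.
Qed.

Lemma embE (X : {set sT}) : X \subset G -> emb G M @: X = embm @* X.
Proof. by move=> sXG; rewrite morphimEsub. Qed.

Lemma emb_sub (X : {set sT}) : X \subset G -> emb G M @: X \subset GG / K.
Proof.
move=> sXG; apply/subsetP=> _ /imsetP[x Xx ->]; rewrite emb_in mem_quotient //.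
exact: sdp2_in.
Qed.

Lemma pB (q : nat) : q.-group M -> q.-group B.
Proof.
move=> pM; apply: morphim_pgroup; rewrite /pgroup cardsT card_dep_ffun /image_mem.
elim: (enum_mem _) => [|x e IH] /=.
  by move: pM; rewrite /pgroup => /pnat_dvd; apply; apply: dvd1n.
rewrite pnatM IH andbT card_sub; apply: etrans pM; congr (pnat _ _); apply: eq_card => y; rewrite inE.
Qed.

Section WithR.
Variables (R : {group sT}) (q q' : nat).
Hypotheses (nsRG : R <| G) (pR : q'.-group R) (pM : q.-group M) (qq' : q' != q).

Local Notation E := (embm @* G).
Local Notation D := (newD G M R).

Lemma newDE : gval D = [~: B / K, embm @* R].
Proof. by rewrite /= embE // normal_sub. Qed.

Lemma newGE : gval (newG G M R) = D <*> E.
Proof. by rewrite -embE. Qed.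

Lemma sEN : E \subset 'N(B / K).
Proof.
rewrite -embE //; apply: subset_trans (emb_sub (subxx _)) _.
exact: quotient_norms nBG.
Qed.

Lemma nDE : E \subset 'N(D).
Proof.
rewrite newDE; apply: normsR; first exact: sEN.
exact: normal_norm (morphim_normal _ nsRG).
Qed.

Lemma sDB : D \subset B / K.
Proof.
rewrite newDE commg_subl; apply: subset_trans sEN.
exact: morphimS (normal_sub nsRG).
Qed.

Lemma newD_normal : D <| newG G M R.
Proof. by rewrite newGE normalYl nDE. Qed.

Lemma newD_TI : D :&: E = 1.
Proof.
have sEG : E \subset GG / K by rewrite -embE // emb_sub.
apply/trivgP; apply: subset_trans (setISS sDB sEG) _.
by rewrite -quotientGI ?sKB // tiBG quotient1.
Qed.

Lemma newD_prod : D * E = newG G M R.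
Proof. by rewrite newGE norm_joinEr // nDE. Qed.

Lemma newD_pgroup : q.-group D.
Proof. exact: pgroupS sDB (quotient_pgroup _ (pB pM)). Qed.

Lemma newD_comm : [~: D, embm @* R] = D.
Proof.
rewrite newDE coprime_commGid' //.
- apply: subset_trans sEN; exact: morphimS (normal_sub nsRG).
- apply: (pnat_coprime (quotient_pgroup _ (pB pM))).
  apply: sub_in_pnat (morphim_pgroup _ pR) => r _.
  by rewrite !inE => /eqP ->.
- exact: pgroup_sol (quotient_pgroup _ (pB pM)).
Qed.

End WithR.

End StepProps.

Lemma index_iota_rcons k j : k <= j.+1 ->
  index_iota k j.+2 = rcons (index_iota k j.+1) j.+1.
Proof.
move=> kj; rewrite /index_iota subSn // -addn1 iotaD /= cats1 subnKC //.
Qed.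

Section Final.
Variables (gT : finGroupType) (Ds Gs Rs : nat -> {set gT}) (n k : nat).
Hypothesis hG : forall j, 0 < j <= n -> group_set (Gs j) /\ group_set (Rs j) /\ Rs j \subset Gs j.
Hypothesis hD : forall j, 1 < j <= n ->
  [/\ group_set (Ds j), Ds j <| Gs j, Ds j :&: Gs j.-1 = 1, Ds j * Gs j.-1 = Gs j &
      [/\ [~: Ds j, Rs j.-1] = Ds j & Rs j = (Ds j)^`(1)]].
Hypothesis hk : 1 < k <= n.

Definition Tp j := (\prod_(l <- rev (index_iota k j.+1)) Ds l)%g.

Lemma final_ind j : k <= j <= n ->
  [/\ group_set (Tp j), Tp j <| Gs j, Tp j :&: Gs k.-1 = 1, Tp j * Gs k.-1 = Gs j &
      [/\ [~: Tp j, Rs k.-1] = Tp j & Ds j \subset Tp j]].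
Proof.
case/andP: hk => k1 kn.
elim: j => [|j IH]; first by rewrite leqn0 => /andP[/eqP k0]; rewrite k0 in k1.
case/andP=> kj jn; rewrite leq_eqVlt in kj; case/orP: kj => [/eqP kj | kj].
  rewrite /Tp -kj /index_iota subSn // subnn /= big_cons big_nil mulg1.
  have [gD nD tD pD [cD _]] := hD hk.
  by split.
have kjn : k <= j <= n by clear -k1 kn kj jn; lia.
have {IH} [gT' nT tT pT [cT sDT]] := IH kjn.
have hj1 : 1 < j.+1 <= n by clear -k1 kn kj jn; lia.
have [gD nD tD pD [cD eR]] := hD hj1.
rewrite /Tp index_iota_rcons ?(ltnW kj) // rev_rcons big_cons -/(Tp j).
pose D := Group gD; pose T := Group gT'.
have j0 : 0 < j by clear -k1 kn kj jn; lia.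
have j0n : 0 < j <= n by clear -k1 kn kj jn; lia.
have j1n : 0 < j.+1 <= n by clear -k1 kn kj jn; lia.
have [gGj [_ _]] := hG j0n.
have [gGj1 [_ _]] := hG j1n.
have k10 : 0 < k.-1 <= n by clear -k1 kn kj jn; lia.
have [gGk [gRk sRGk]] := hG k10.
pose Gj := Group gGj; pose Gj1 := Group gGj1; pose Gk := Group gGk; pose Rk := Group gRk.
have jm1 : j.+1.-1 = j by [].
rewrite jm1 in tD pD cD.
have eD : Ds j.+1 = gval D by [].
have eT : Tp j = gval T by [].
rewrite eD eT in nD tD pD cD sDT nT tT pT cT eR *.
have eGj : Gs j = gval Gj by [].
have eGj1 : Gs j.+1 = gval Gj1 by [].
have eGk : Gs k.-1 = gval Gk by [].
have eRk : Rs k.-1 = gval Rk by [].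
rewrite eGj eGj1 eGk eRk in nD tD pD nT tT pT cT sRGk *.
have sGjGj1 : Gj \subset Gj1 by rewrite -pD; apply: mulG_subr.
have sTGj : T \subset Gj := normal_sub nT.
have nDGj : Gj \subset 'N(D) := subset_trans sGjGj1 (normal_norm nD).
have nDT : T \subset 'N(D) := subset_trans sTGj nDGj.
have eDT : D * T = D <*> T by rewrite norm_joinEr.
have sGkGj : Gk \subset Gj by rewrite -pT; apply: mulG_subr.
have gDT : group_set (D * T) by rewrite eDT; exact: groupP.
have nDT1 : D * T <| Gj1.
  rewrite /normal mul_subG ?(normal_sub nD) ?(subset_trans sTGj sGjGj1) //.
  rewrite -pD mul_subG //.
    rewrite eDT; exact: subset_trans (joing_subl D T) (normG _).
  exact: normsM nDGj (normal_norm nT).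
have j1 : 1 < j <= n by clear -k1 kn kj jn; lia.
have [gDj _ _ _ [_ eRj]] := hD j1.
have sRjT : Rs j \subset T.
  rewrite eRj; apply: subset_trans sDT.
  exact: (der_sub 1 (Group gDj)).
split => //.
- have eI : Gj :&: (D * T) = T by rewrite -group_modr // setIC tD mul1g.
  by rewrite -(setIidPr sGkGj) setIA (setIC (D * T)) eI tT.
- by rewrite -mulgA pT pD.
split; last exact: mulG_subl.
apply/eqP; rewrite eqEsubset; apply/andP; split.
  have nDT1' := nDT1; rewrite eDT in nDT1'.
  rewrite eDT commg_subl; apply: subset_trans (normal_norm nDT1').
  by apply: subset_trans sGjGj1; apply: subset_trans sGkGj.
have nN : D * T \subset 'N([~: D * T, Rk]) by rewrite eDT; exact: commg_norml.
have sTN : T \subset [~: D * T, Rk].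
  by rewrite -{1}cT; apply: commSg; exact: mulG_subr.
apply: mul_subG; last exact: sTN.
rewrite -{1}cD; apply: subset_trans (commgS D (subset_trans sRjT sTN)) _.
rewrite commg_subr; apply: subset_trans nN; exact: mulG_subl.
Qed.
End Final.

Definition inv (p : nat -> nat) (n : nat) (s : stage) : Prop :=
  [/\ st_Gs s n = st_G s, st_Rs s n = st_R s,
    (forall j, 0 < j <= n -> [/\ group_set (st_Gs s j), group_set (st_Rs s j),
        st_Rs s j <| st_Gs s j, (p j).-group (st_Rs s j) & st_Gs s j \subset st_G s]),
    (forall j, 0 < j < n -> st_Gs s j \subset st_Gs s j.+1) &
    (forall j, 1 < j <= n -> [/\ group_set (st_Ds s j), st_Ds s j <| st_Gs s j,
        (p j).-group (st_Ds s j), st_Ds s j :&: st_Gs s j.-1 = 1 &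
        [/\ st_Ds s j * st_Gs s j.-1 = st_Gs s j,
            [~: st_Ds s j, st_Rs s j.-1] = st_Ds s j &
            st_Rs s j = (st_Ds s j)^`(1)]])].

Section NS.
Variables (n : nat) (T : finGroupType) (G R : {group T}) (Ds Gs Rs : nat -> {set T})
  (mT : finGroupType) (M : {group mT}).
Local Notation s := (Stage G R Ds Gs Rs).
Lemma nsG : st_G (next_stage n s M) = newG G M R. Proof. by []. Qed.
Lemma nsR : st_R (next_stage n s M) = newR G M R. Proof. by []. Qed.
Lemma nsGs j : st_Gs (next_stage n s M) j = if j == n then gval (newG G M R) else emb G M @: Gs j.
Proof. by []. Qed.
Lemma nsRs j : st_Rs (next_stage n s M) j = if j == n then gval (newR G M R) else emb G M @: Rs j.
Proof. by []. Qed.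
Lemma nsDs j : st_Ds (next_stage n s M) j = if j == n then gval (newD G M R) else emb G M @: Ds j.
Proof. by []. Qed.
End NS.

Lemma inv_step (p : nat -> nat) n (s : stage) (mT : finGroupType) (M : {group mT}) :
  0 < n -> inv p n s -> (p n.+1).-group M -> p n != p n.+1 ->
  inv p n.+1 (next_stage n.+1 s M).
Proof.
case: s => T G R Ds Gs Rs n0 [/= eGn eRn hG hC hD] pM pne.
have nn : 0 < n <= n by rewrite n0 leqnn.
have [_ _ nRG pR _] := hG n nn.
rewrite eGn eRn in nRG pR.
pose f := embm G M.
have injf : 'injm f := injm_emb G M.
have sub j : 0 < j <= n -> Gs j \subset G by case/hG.
have embS (X : {set T}) : X \subset G -> emb G M @: X = f @* X by move=> sX; exact: embE.
rewrite /inv nsG nsR nsGs nsRs eqxx.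
have nsEG : f @* G \subset newG G M R by rewrite newGE; exact: joing_subr.
split => //.
- move=> j; rewrite !nsGs !nsRs; move=> /andP[j0]; rewrite leq_eqVlt => /orP[/eqP -> | jn].
    rewrite eqxx; split; try exact: groupP.
    + exact: char_normal_trans (der_char 1 _) (newD_normal _ nRG).
    + by apply: pgroupS (der_sub 1 _) _; apply: newD_pgroup.
    + exact: subxx.
  rewrite (ltn_eqF jn).
  have jn' : 0 < j <= n by rewrite j0 -ltnS.
  have [gG gR nRG' pR' sG] := hG j jn'.
  rewrite !embS ?sG ?(subset_trans (normal_sub nRG') sG) //.
  split.
  + exact: (groupP (f @* Group gG)%G).
  + exact: (groupP (f @* Group gR)%G).
  + exact: morphim_normal.
  + exact: (@morphim_pgroup _ _ _ f _ (Group gR) pR').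
  + exact: subset_trans (morphimS f sG) nsEG.
- move=> j; rewrite !nsGs; move=> /andP[j0 jn]; rewrite (ltn_eqF jn) eqSS.
  have jn' : 0 < j <= n by rewrite j0 -ltnS.
  have [gG _ _ _ sG] := hG j jn'.
  case: eqP => [ej | nej].
    by rewrite embS ?sG // ej eGn.
  have jn2 : 0 < j.+1 <= n.
    by rewrite /= ltn_neqAle (introN eqP nej) -ltnS.
  have [_ _ _ _ sG'] := hG j.+1 jn2.
  rewrite !embS ?sG ?sG' //; apply: morphimS; apply: hC.
  by rewrite j0; case/andP: jn2.
- move=> j; rewrite !nsGs !nsRs !nsDs; move=> /andP[j1]; rewrite leq_eqVlt => /orP[/eqP -> | jn].
    rewrite eqxx [n.+1.-1]/= (ltn_eqF (ltnSn n)) !embS ?eGn ?eRn ?normal_sub //.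
    split.
    + exact: groupP.
    + exact: newD_normal.
    + exact: newD_pgroup.
    + exact: newD_TI.
    split => //.
    + exact: newD_prod.
    + exact: newD_comm nRG pR pM pne.
  rewrite (ltn_eqF jn) (ltn_eqF (leq_ltn_trans (leq_pred j) jn)).
  have jn' : 1 < j <= n by rewrite j1 -ltnS.
  have jn1 : 0 < j <= n by rewrite (ltnW j1) -ltnS.
  have jm1 : 0 < j.-1 <= n.
    by rewrite -ltnS prednK ?(ltnW j1) ?j1 // (leq_trans (leq_pred j)) // -ltnS.
  have [gD nD pD tD [mD cD eR]] := hD j jn'.
  have [gG gR nRG' _ sG] := hG j jn1.
  have [gG1 gR1 nRG1 _ sG1] := hG j.-1 jm1.
  have sD := subset_trans (normal_sub nD) sG.
  have sR1 := subset_trans (normal_sub nRG1) sG1.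
  have sR := subset_trans (normal_sub nRG') sG.
  rewrite !embS ?sD ?sG ?sG1 ?sR1 ?sR //.
  split.
  + exact: (groupP (f @* Group gD)%G).
  + exact: morphim_normal.
  + exact: (@morphim_pgroup _ _ _ f _ (Group gD) pD).
  + by rewrite -(injmI injf) tD morphim1.
  split.
  + by rewrite -morphimMl // mD.
  + by rewrite -morphimR // cD.
  + by rewrite eR (@morphim_der _ _ _ f 1 (Group gD)).
Qed.

Lemma inv_tower (p : nat -> nat)
  (p_prime : forall n, 0 < n -> prime (p n))
  (p_neq : forall n, 0 < n -> p n.+1 != p n)
  (gT1 : finGroupType) (G1 : {group gT1})
  (G1_order : #|G1| = p 1%N)
  (mT : nat -> finGroupType) (M : forall n, {group mT n})
  (M_es : forall n, 1 < n -> extra_special (p n) (M n) /\ #|M n| = (p n ^ 3)%N)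
  m : inv p m.+1 (tower G1 M m).
Proof.
elim: m => [|m IH].
  split => //=.
  - move=> j /andP[j0 j1].
    have -> : j = 1%N by apply/eqP; rewrite eqn_leq j1 j0.
    split; [exact: groupP|exact: groupP|exact: normal_refl| |exact: subxx].
    by rewrite /pgroup G1_order pnat_id // p_prime.
  - by move=> [|[|j]].
change (inv p m.+2 (next_stage m.+2 (tower G1 M m) (M m.+2))).
apply: inv_step => //.
  by have [/and3P[]] := M_es m.+2 isT.
by rewrite eq_sym p_neq.
Qed.

Unset Implicit Arguments.

Theorem lemma2p6
  (p : nat -> nat)
  (p_prime : forall n, 0 < n -> prime (p n))
  (p_neq : forall n, 0 < n -> p n.+1 != p n)
  (gT1 : finGroupType) (G1 : {group gT1})
  (G1_cyclic : cyclic G1) (G1_order : #|G1| = p 1%N)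
  (mT : nat -> finGroupType) (M : forall n, {group mT n})
  (M_es : forall n, 1 < n -> extra_special (p n) (M n) /\ #|M n| = (p n ^ 3)%N)
  (i : nat) (hi : 1 < i) :
  let s := tower G1 M i.-1 in
  forall k, 1 < k <= i ->
  let T := (\prod_(j <- rev (index_iota k i.+1)) st_Ds s j)%g in
  [/\ group_set T /\ T <| st_G s,
      T :&: st_Gs s k.-1 = 1 /\ T * st_Gs s k.-1 = st_G s
    & [~: T, st_Rs s k.-1] = T].
Proof.
move=> s k hk T.
have hinv : inv p i s.
  by rewrite /s -{1}(prednK (ltnW hi)); exact: inv_tower.
case: hinv => eGn _ hG _ hD.
have hG' : forall j, 0 < j <= i -> group_set (st_Gs s j) /\ group_set (st_Rs s j) /\
    st_Rs s j \subset st_Gs s j.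
  by move=> j hj; have [? ? ? _ _] := hG j hj; split => //; split => //; exact: normal_sub.
have hD' : forall j, 1 < j <= i ->
  [/\ group_set (st_Ds s j), st_Ds s j <| st_Gs s j, st_Ds s j :&: st_Gs s j.-1 = 1,
      st_Ds s j * st_Gs s j.-1 = st_Gs s j &
      [/\ [~: st_Ds s j, st_Rs s j.-1] = st_Ds s j & st_Rs s j = (st_Ds s j)^`(1)]].
  by move=> j hj; have [? ? _ ? [? ? ?]] := hD j hj; split.
have hki : k <= i <= i by rewrite leqnn andbT; case/andP: hk.
have [g n t pr [c _]] := final_ind hG' hD' hk hki.
rewrite -eGn; split => //.
Qed.
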